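(* Let $n\geq 5$ be an odd integer, $m=\frac{n+1}{2}$, and let $(D;H)$ be a based diagram of $(K_n;H)$ with $H=v_1v_2\cdots v_nv_1$ such that $M(D;H)=M_n$. Then $$c_D(e_{(m,n)})=c_D(e_{(1,m)})+c_D(e_{(2,n)})+1.$$
   Context: $K_n$ is the complete graph with vertices $v_1,\dots,v_n$, lying on $H$ in this cyclic order. A based diagram $(D;H)$ of $(K_n;H)$ is a diagram of $K_n$ on $S^2$ in which $H$ is drawn on the equator and every other edge diagram lies (apart from its endpoints) in the Northern or Southern Hemisphere; as in the paper's drawings, the edges in each hemisphere are drawn so that two edge diagrams not in $H$ intersect in their interiors if and only if they lie in the same hemisphere and their endpoints alternate along $H$. $e_{(i,j)}$ denotes the edge diagram joining $v_i,v_j$, and for an edge diagram $e$, $c_D(e)$ is the number of edge diagrams of $D$ that intersect the interior of $e$. The matrix $M(D;H)=(a_{(i,j)})$ has $a_{(i,j)}=0$ if $j\le i+1$ or $(i,j)=(1,n)$, and otherwise $a_{(i,j)}=1$ (resp. $-1$) if $e_{(i,j)}$ is in the Northern (resp. Southern) Hemisphere. For odd $n$, $M_n=(a_{(i,j)})$ is the $n\times n$ matrix with $a_{(i,j)}=0$ if $j\le i+1$ or $(i,j)=(1,n)$; otherwise $a_{(i,j)}=1$ if ($j\ge i+2$ and $\frac{n+3}{2}-i\le j\le n-i$) or ($j\ge i+2$ and $j\ge\frac{3n+1}{2}-i$); and $a_{(i,j)}=-1$ in all other cases. *)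

(* Defs.v *)
From mathcomp Require Import all_boot all_order all_algebra.
Set Implicit Arguments. Unset Strict Implicit. Unset Printing Implicit Defensive.
Import GRing.Theory Num.Theory.

(* Vertices of K_n are the naturals 1..n, lying on H = v_1 v_2 ... v_n v_1 in
   this cyclic order.  An edge of K_n is a pair (i,j) with 1 <= i < j <= n. *)

Definition is_edge (n i j : nat) : bool := [&& 0 < i, i < j & j <= n].

Definition in_H (n i j : nat) : bool := (j == i.+1) || ((i == 1) && (j == n)).

(* A based diagram (D;H) of (K_n;H): H drawn on the equator, every other edge
   diagram e_(i,j) lies in the Northern (true) or Southern (false) hemisphere.
   Edges in each hemisphere are drawn as in the paper, so that two edge
   diagrams not in H cross in their interiors iff they are in the same
   hemisphere and their endpoints alternate along H.  Hence a based diagram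
   is determined by its hemisphere assignment. *)
Record based_diagram (n : nat) := BasedDiagram { north : nat -> nat -> bool }.

Definition alternate (i j k l : nat) : bool :=
  [&& i < k, k < j & j < l] || [&& k < i, i < l & l < j].

Definition meets_interior n (D : based_diagram n) (i j k l : nat) : bool :=
  [&& ~~ in_H n i j, ~~ in_H n k l, north D i j == north D k l
    & alternate i j k l].

Definition cD n (D : based_diagram n) (i j : nat) : nat :=
  \sum_(1 <= k < n.+1) \sum_(1 <= l < n.+1)
     (is_edge n k l && meets_interior D i j k l).

Definition MD n (D : based_diagram n) (i j : nat) : int :=
  if (j <= i.+1) || ((i == 1) && (j == n)) then 0%R
  else if north D i j then 1%R else (-1)%R.

Definition Mn (n i j : nat) : int :=
  if (j <= i.+1) || ((i == 1) && (j == n)) then 0%R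
  else if ((i + 2 <= j) && ((n + 3) %/ 2 - i <= j <= n - i))
          || ((i + 2 <= j) && ((3 * n + 1) %/ 2 - i <= j))
  then 1%R else (-1)%R.

(* Main.v *)
Require Import Defs.
From mathcomp Require Import all_boot all_order all_algebra.
From mathcomp Require Import zify.

Definition NB (n i j : nat) : bool :=
  ~~ ((j <= i.+1) || ((i == 1) && (j == n))) &&
  (((i + 2 <= j) && ((n + 3) %/ 2 - i <= j <= n - i))
          || ((i + 2 <= j) && ((3 * n + 1) %/ 2 - i <= j))).

Lemma north_eq n (D : based_diagram n) :
  (forall i j, 1 <= i <= n -> 1 <= j <= n -> MD D i j = Mn n i j) ->
  forall k l, is_edge n k l -> ~~ in_H n k l -> north D k l = NB n k l.
Proof.
move=> H k l E F.
have := H k l ltac:(rewrite /is_edge in E; lia) ltac:(rewrite /is_edge in E; lia).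
rewrite /MD /Mn /NB.
have -> : ((l <= k.+1) || ((k == 1) && (l == n))) = false.
  by rewrite /is_edge /in_H in E F; lia.
rewrite /=.
by case: (north D k l); case: ifP.
Qed.

Lemma summand_eq n (D : based_diagram n) :
  (forall i j, 1 <= i <= n -> 1 <= j <= n -> MD D i j = Mn n i j) ->
  forall i j k l, is_edge n i j ->
  (is_edge n k l && meets_interior D i j k l) =
  is_edge n k l && [&& ~~ in_H n i j, ~~ in_H n k l, NB n i j == NB n k l
    & alternate i j k l].
Proof.
move=> H i j k l Eij; rewrite /meets_interior.
case E: (is_edge n k l) => //=.
case F: (in_H n i j) => //=.
case G: (in_H n k l) => //=.
by rewrite !(@north_eq _ D H) // ?F ?G.
Qed.

Lemma count_range a b c d :
  \sum_(a <= l < b) ((c <= l) && (l < d) : nat) = minn b d - maxn a c.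
Proof.
elim: b => [|b IH]; first by rewrite big_geq //; lia.
case: (leqP a b) => hab.
  rewrite big_nat_recr //= IH. case: ((c <= b) && (b < d)) / idP => h; lia.
rewrite big_geq //; lia.
Qed.

Lemma sum_andl (r : seq nat) (a : bool) (F : nat -> bool) :
  \sum_(i <- r) ((a && F i) : nat) = a * \sum_(i <- r) (F i : nat).
Proof.
case: a; first by rewrite mul1n.
by rewrite mul0n big1.
Qed.

Theorem lemma3p2 (n : nat) (D : based_diagram n) :
  5 <= n -> odd n ->
  (forall i j, 1 <= i <= n -> 1 <= j <= n -> MD D i j = Mn n i j) ->
  let m := n.+1 %/ 2 in
  cD D m n = cD D 1 m + cD D 2 n + 1.
Proof.
move=> h5 hodd H m.
have [p hp] : exists p, n = 2 * p + 1.
  exists n./2. by rewrite -{1}(odd_double_half n) hodd -muln2; lia.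
have hm : m = p + 1 by rewrite /m hp; lia.
have d1 : (n + 3) %/ 2 = p + 2 by rewrite hp; lia.
have d2 : (3 * n + 1) %/ 2 = 3 * p + 2 by rewrite hp; lia.
rewrite hm /cD.
have Hsum : forall i j (P : nat -> bool) (c d : nat -> nat), is_edge n i j ->
  (forall k l, 1 <= k <= n -> 1 <= l <= n ->
     is_edge n k l && [&& ~~ in_H n i j, ~~ in_H n k l, NB n i j == NB n k l
       & alternate i j k l] = P k && ((c k <= l) && (l < d k))) ->
  \sum_(1 <= k < n.+1) \sum_(1 <= l < n.+1) (is_edge n k l && meets_interior D i j k l)
  = \sum_(1 <= k < n.+1) (P k * (minn n.+1 (d k) - maxn 1 (c k))).
  move=> i j P c d Eij HP.
  apply: eq_big_nat => k hk.
  rewrite -count_range -sum_andl.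
  apply: eq_big_nat => l hl.
  rewrite (@summand_eq _ D H) // HP //; lia.
have hd : forall k l, NB n k l = ~~ ((l <= k.+1) || ((k == 1) && (l == n))) &&
  (((k + 2 <= l) && (p + 2 - k <= l <= n - k))
          || ((k + 2 <= l) && (3 * p + 2 - k <= l))).
  by move=> k l; rewrite /NB d1 d2.
rewrite (Hsum (p+1) n (fun k => k < p+1) (fun _ => p+2) (fun k => 2 * p + 2 - k));
  last 2 first.
- rewrite /is_edge; lia.
- move=> k l hk hl.
  have e1 : NB n (p+1) n = true by rewrite hd; lia.
  have e2 : in_H n (p+1) n = false by rewrite /in_H; lia.
  rewrite e1 e2 /= hd /is_edge /in_H /alternate; lia.
rewrite (Hsum 1 (p+1) (fun k => (2 <= k) && (k < p+1)) (fun _ => p+2) (fun k => 2 * p + 2 - k));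
  last 2 first.
- rewrite /is_edge; lia.
- move=> k l hk hl.
  have e1 : NB n 1 (p+1) = true by rewrite hd; lia.
  have e2 : in_H n 1 (p+1) = false by rewrite /in_H; lia.
  rewrite e1 e2 /= hd /is_edge /in_H /alternate; lia.
rewrite (Hsum 2 n (fun k => k == 1) (fun _ => 3) (fun _ => p+1));
  last 2 first.
- rewrite /is_edge; lia.
- move=> k l hk hl.
  have e1 : NB n 2 n = false by rewrite hd; lia.
  have e2 : in_H n 2 n = false by rewrite /in_H; lia.
  rewrite e1 e2 /= hd /is_edge /in_H /alternate; lia.
have hn1 : 1 < n.+1 by lia.
rewrite !(@big_ltn _ _ _ 1 n.+1 _ hn1) hp.
rewrite [X in _ = _ + (_ + X) + _]big_nat_cond [X in _ = _ + (_ + X) + _]big1; last first.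
  by move=> k /andP[/andP[hk _] _]; lia.
have -> : \sum_(2 <= i < (2 * p + 1).+1)
      ((i < p + 1) * (minn (2 * p + 1).+1 (2 * p + 2 - i) - maxn 1 (p + 2))) =
    \sum_(2 <= i < (2 * p + 1).+1)
      (((2 <= i) && (i < p + 1)) * (minn (2 * p + 1).+1 (2 * p + 2 - i) - maxn 1 (p + 2))).
  by apply: eq_big_nat => k hk; lia.
lia.
Qed.
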